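(* Let $\varepsilon$ be a centered Gaussian process on $\mathbb{R}^d$ with unit variance and correlation function $\rho$, let $Y(x)=(2\pi)^{1/2}\varepsilon(x)$, and for a tuple $y=(y_1,\ldots,y_n)\in(\mathbb{R}^d)^n$ with positive definite covariance matrix $\Sigma_y$ of $\varepsilon(y)$, let $\lambda_y$ be the density of $\Lambda_y(A)=\int_0^\infty\Pr\{\zeta Y(y)\in A\}\zeta^{-2}d\zeta$, $A\subset\mathbb{R}^n$ Borel, namely $\lambda_y(w)=\pi^{-(n-1)/2}|\Sigma_y|^{-1/2}(w^T\Sigma_y^{-1}w)^{-(n+1)/2}\Gamma((n+1)/2)$. Let $m,k\ge1$, $s\in(\mathbb{R}^d)^m$, $x\in(\mathbb{R}^d)^k$ such that the covariance matrix $$\Sigma_{(s,x)}=\begin{bmatrix}\Sigma_s&\Sigma_{s:x}\\ \Sigma_{x:s}&\Sigma_x\end{bmatrix}$$ of $(\varepsilon(s),\varepsilon(x))$ is positive definite. Then for all $u\in\mathbb{R}^m$ and $z\in\mathbb{R}^k\setminus\{0\}$, the conditional intensity function $\lambda_{s\mid x,z}(u)=\lambda_{(s,x)}(u,z)/\lambda_x(z)$ is the density of a multivariate Student distribution with $k+1$ degrees of freedom, location $\mu=\Sigma_{s:x}\Sigma_x^{-1}z$ and scale matrix $\tilde\Sigma=\frac{a_x(z)}{k+1}(\Sigma_s-\Sigma_{s:x}\Sigma_x^{-1}\Sigma_{x:s})$, where $a_x(z)=z^T\Sigma_x^{-1}z$; that is, $$\lambda_{s\mid x,z}(u)=\pi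^{-m/2}(k+1)^{-m/2}|\tilde\Sigma|^{-1/2}\left\{1+\frac{(u-\mu)^T\tilde\Sigma^{-1}(u-\mu)}{k+1}\right\}^{-(m+k+1)/2}\frac{\Gamma\left(\frac{m+k+1}{2}\right)}{\Gamma\left(\frac{k+1}{2}\right)}.$$
   Context: This is the Schlather max-stable model, represented with $Y=(2\pi)^{1/2}\varepsilon$ and $\{\zeta_i\}$ a Poisson process on $(0,\infty)$ with intensity $\zeta^{-2}d\zeta$. For tuples, $\varepsilon(y)$ denotes the vector of values at the points of $y$; $(s,x)$ denotes the concatenated tuple and $(u,z)$ the concatenated vector; $\Sigma_{s:x}$ is the cross-covariance matrix between $\varepsilon(s)$ and $\varepsilon(x)$ and $\Sigma_{x:s}=\Sigma_{s:x}^T$. *)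

(* Defs.v *)
From HB Require Import structures.
From mathcomp Require Import all_boot all_order all_algebra.
From mathcomp Require Import all_classical all_reals all_analysis.
Set Implicit Arguments. Unset Strict Implicit. Unset Printing Implicit Defensive.
Import Order.TTheory GRing.Theory Num.Theory.
Local Open Scope ring_scope.
Local Open Scope classical_set_scope.

Section Defs.
Variable R : realType.

Definition Gamma (a : R) : R :=
  Rintegral lebesgue_measure `]0%R, +oo[%classic
    (fun t : R => t `^ (a - 1) * expR (- t)).

Definition posdef n (A : 'M[R]_n) : Prop :=
  A^T = A /\ forall v : 'rV[R]_n, v != 0 -> 0 < (v *m A *m v^T) 0 0.

Definition qform n (A : 'M[R]_n) (w : 'rV[R]_n) : R := (w *m A *m w^T) 0 0.

Definition covmx d n (rho : 'rV[R]_d -> 'rV[R]_d -> R) (y : 'I_n -> 'rV[R]_d)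
  : 'M[R]_n := \matrix_(i, j) rho (y i) (y j).

Definition crosscov d m k (rho : 'rV[R]_d -> 'rV[R]_d -> R)
  (s : 'I_m -> 'rV[R]_d) (x : 'I_k -> 'rV[R]_d) : 'M[R]_(m, k) :=
  \matrix_(i, j) rho (s i) (x j).

Definition cat_pts d m k (s : 'I_m -> 'rV[R]_d) (x : 'I_k -> 'rV[R]_d)
  : 'I_(m + k) -> 'rV[R]_d :=
  fun i => match fintype.split i with inl a => s a | inr b => x b end.

Definition lambda_dens n (Sigma : 'M[R]_n) (w : 'rV[R]_n) : R :=
  pi `^ (- ((n%:R - 1) / 2)) * (\det Sigma) `^ (- (1 / 2))
  * (qform (invmx Sigma) w) `^ (- ((n%:R + 1) / 2)) * Gamma ((n%:R + 1) / 2).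

Definition lambda d n (rho : 'rV[R]_d -> 'rV[R]_d -> R) (y : 'I_n -> 'rV[R]_d)
  (w : 'rV[R]_n) : R := lambda_dens (covmx rho y) w.

Definition student_dens m (nu : R) (mu : 'rV[R]_m) (S : 'M[R]_m) (u : 'rV[R]_m) : R :=
  pi `^ (- (m%:R / 2)) * nu `^ (- (m%:R / 2)) * (\det S) `^ (- (1 / 2))
  * (1 + qform (invmx S) (u - mu) / nu) `^ (- ((m%:R + nu) / 2))
  * Gamma ((m%:R + nu) / 2) / Gamma (nu / 2).

End Defs.

(* Main.v *)
Require Import Defs.
From HB Require Import structures.
From mathcomp Require Import all_boot all_order all_algebra.
From mathcomp Require Import all_classical all_reals all_analysis.
From mathcomp Require Import ring.
Import Order.TTheory GRing.Theory Num.Theory.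
Local Open Scope ring_scope.
Set Implicit Arguments. Unset Strict Implicit. Unset Printing Implicit Defensive.

Section H.
Variable R : realType.

Lemma inv_uniq n (A B : 'M[R]_n) : A *m B = 1%:M -> invmx A = B.
Proof.
move=> h; have [uA _] := mulmx1_unit h.
by rewrite -[invmx A]mulmx1 -h mulmxA mulVmx // mul1mx.
Qed.

Lemma qform_diag n1 n2 (A : 'M[R]_n1) (D : 'M[R]_n2) p q :
  qform (block_mx A 0 0 D) (row_mx p q) = qform A p + qform D q.
Proof.
rewrite /qform mul_row_block !mulmx0 addr0 add0r tr_row_mx mul_row_col.
by rewrite mxE.
Qed.

Lemma qform_dr n1 n2 (A : 'M[R]_n1) B C (D : 'M[R]_n2) v :
  qform (block_mx A B C D) (row_mx 0 v) = qform D v.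
Proof.
rewrite /qform mul_row_block !mul0mx !add0r tr_row_mx mul_row_col trmx0.
by rewrite mulmx0 add0r.
Qed.

Lemma qform_ul n1 n2 (A : 'M[R]_n1) B C (D : 'M[R]_n2) v :
  qform (block_mx A B C D) (row_mx v 0) = qform A v.
Proof.
rewrite /qform mul_row_block !mul0mx !addr0 tr_row_mx mul_row_col trmx0.
by rewrite mulmx0 addr0.
Qed.

Lemma posdef_dr n1 n2 (A : 'M[R]_n1) B C (D : 'M[R]_n2) :
  posdef (block_mx A B C D) -> posdef D.
Proof.
case=> hs hp; split.
  by move: hs; rewrite tr_block_mx => /eq_block_mx[].
move=> v v0; have := hp (row_mx 0 v); rewrite -/(qform _ _) qform_dr; apply.
by rewrite -row_mx0; apply: contra v0 => /eqP/eq_row_mx[_ ->].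
Qed.

Lemma posdef_ul n1 n2 (A : 'M[R]_n1) B C (D : 'M[R]_n2) :
  posdef (block_mx A B C D) -> posdef A.
Proof.
case=> hs hp; split.
  by move: hs; rewrite tr_block_mx => /eq_block_mx[].
move=> v v0; have := hp (row_mx v 0); rewrite -/(qform _ _) qform_ul; apply.
by rewrite -row_mx0; apply: contra v0 => /eqP/eq_row_mx[-> _].
Qed.

Lemma posdef_congr n (U N : 'M[R]_n) : U \in unitmx -> N^T = N ->
  posdef (U *m N *m U^T) -> posdef N.
Proof.
move=> uU hs [_ hp]; split => // v v0.
have := hp (v *m invmx U).
have -> : v *m invmx U *m (U *m N *m U^T) *m (v *m invmx U)^T = v *m N *m v^T.
  by rewrite !mulmxA mulmxKV // -mulmxA -trmx_mul mulmxKV.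
apply; apply: contra v0 => /eqP h.
by rewrite -(mulmxKV uU v) h mul0mx.
Qed.

Lemma posdef_inv n (A : 'M[R]_n) : posdef A -> A \in unitmx -> posdef (invmx A).
Proof.
move=> [hs hp] uA; split; first by rewrite trmx_inv hs.
move=> v v0; have := hp (v *m invmx A).
have -> : v *m invmx A *m A *m (v *m invmx A)^T = v *m invmx A *m v^T.
  by rewrite mulmxKV // trmx_mul trmx_inv hs mulmxA.
apply; apply: contra v0 => /eqP h.
by rewrite -(mulmxKV uA v) h mul0mx.
Qed.

Lemma qform_ge0 n (A : 'M[R]_n) v : posdef A -> 0 <= qform A v.
Proof.
move=> [_ hp]; have [->|v0] := eqVneq v 0.
  by rewrite /qform !mul0mx mxE.
exact/ltW/hp.
Qed.

Lemma schur n1 n2 (A : 'M[R]_n1) (B : 'M[R]_(n1, n2)) (D : 'M[R]_n2) :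
  D \in unitmx -> D^T = D ->
  block_mx A B B^T D =
  block_mx 1%:M (B *m invmx D) 0 1%:M *m
    block_mx (A - B *m invmx D *m B^T) 0 0 D *m
    (block_mx 1%:M (B *m invmx D) 0 1%:M)^T.
Proof.
move=> uD hs.
rewrite tr_block_mx trmx0 !trmx1 trmx_mul trmx_inv hs.
rewrite mulmx_block !(mulmx0, mul0mx, mul1mx, addr0, add0r) mulmxKV //.
rewrite mulmx_block !(mulmx0, mul0mx, mul1mx, mulmx1, addr0, add0r).
by rewrite [B *m (_ *m _)]mulmxA subrK mulKVmx.
Qed.


Lemma det_U n1 n2 (X : 'M[R]_(n1, n2)) : \det (block_mx 1%:M X 0 1%:M) = 1.
Proof. by rewrite det_ublock !det1 mulr1. Qed.

Lemma schur_facts n1 n2 (A : 'M[R]_n1) (B : 'M[R]_(n1, n2)) (D : 'M[R]_n2) :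
  posdef (block_mx A B B^T D) -> D \in unitmx ->
  posdef (A - B *m invmx D *m B^T) /\
  \det (block_mx A B B^T D) = \det (A - B *m invmx D *m B^T) * \det D.
Proof.
move=> hM uD.
have hD := posdef_dr hM; have hA := posdef_ul hM.
have hs := schur A B uD hD.1.
have uU : block_mx 1%:M (B *m invmx D) 0 1%:M \in unitmx.
  by rewrite unitmxE det_U unitr1.
split.
  have h0 : posdef (block_mx (A - B *m invmx D *m B^T) 0 0 D).
    apply: posdef_congr uU _ _; last by rewrite -hs.
    rewrite tr_block_mx !trmx0 hD.1 raddfB /= hA.1 !trmx_mul trmxK trmx_inv hD.1.
    by rewrite mulmxA.
  exact: posdef_ul h0.
by rewrite hs !det_mulmx det_tr det_U det_ublock mul1r mulr1.
Qed.

Lemma det_pos n (A : 'M[R]_n) : posdef A -> 0 < \det A.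
Proof.
elim: n A => [|n IH] A hA; first by rewrite det_mx00.
pose A' : 'M[R]_(1 + n) := A.
have eA : A' = block_mx (ulsubmx A') (ursubmx A') (dlsubmx A') (drsubmx A').
  by rewrite submxK.
move: (ulsubmx A') (ursubmx A') (dlsubmx A') (drsubmx A') eA => a b c D eA.
have hs : A'^T = A' := hA.1.
have edl : c = b^T.
  by move: hs; rewrite eA tr_block_mx => /eq_block_mx[_ _ h _]; rewrite h.
have hA' : posdef (block_mx a b b^T D) by rewrite -edl -eA.
have hD := posdef_dr hA'.
have dD := IH _ hD.
have uD : D \in unitmx by rewrite unitmxE unitfE gt_eqF.
have [hS dE] := schur_facts hA' uD.
change (0 < \det A'); rewrite eA edl dE mulr_gt0 //.
rewrite det_mx11; have := hS.2 1%:M; rewrite -/(qform _ _).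
rewrite /qform mul1mx trmx1 mulmx1; apply.
exact: oner_neq0.
Qed.

Lemma powRV (x r : R) : 0 < x -> (x^-1) `^ r = (x `^ r)^-1.
Proof.
move=> x0.
have h : x `^ r * (x^-1) `^ r = 1.
  by rewrite -powRM ?invr_ge0 ?ltW // mulfV ?gt_eqF // powR1.
have xr : x `^ r != 0 by rewrite gt_eqF // powR_gt0.
by rewrite -[LHS]mul1r -(mulVf xr) -mulrA h mulr1.
Qed.

Lemma qform_conj n (P A : 'M[R]_n) w : qform (P^T *m A *m P) w = qform A (w *m P^T).
Proof. by rewrite /qform trmx_mul trmxK !mulmxA. Qed.

Lemma qformZ n (c : R) (A : 'M[R]_n) v : qform (c *: A) v = c * qform A v.
Proof. by rewrite /qform -scalemxAr -scalemxAl mxE. Qed.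

End H.

Theorem mainTheorem4 (R : realType) (d m k : nat)
  (rho : 'rV[R]_d -> 'rV[R]_d -> R)
  (rho_sym : forall a b, rho a b = rho b a)
  (rho_unit : forall a, rho a a = 1)
  (s : 'I_m -> 'rV[R]_d) (x : 'I_k -> 'rV[R]_d)
  (hm : (1 <= m)%N) (hk : (1 <= k)%N)
  (hpd : posdef (covmx rho (cat_pts s x)))
  (u : 'rV[R]_m) (z : 'rV[R]_k) (hz : z != 0) :
  let Ss := covmx rho s in
  let Sx := covmx rho x in
  let Ssx := crosscov rho s x in
  let mu := z *m (Ssx *m invmx Sx)^T in
  let St := (qform (invmx Sx) z / (k%:R + 1)) *: (Ss - Ssx *m invmx Sx *m Ssx^T) in
  lambda rho (cat_pts s x) (row_mx u z) / lambda rho x z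
  = student_dens (k%:R + 1) mu St u.
Proof.
move=> Ss Sx Ssx mu St.
have eM : covmx rho (cat_pts s x) = block_mx Ss Ssx Ssx^T Sx.
  apply/matrixP => i j; rewrite !mxE /cat_pts.
  case: (fintype.split i) => a; rewrite !mxE;
    case: (fintype.split j) => b; rewrite !mxE // rho_sym.
have hM : posdef (block_mx Ss Ssx Ssx^T Sx) by rewrite -eM.
have hX := posdef_dr hM.
have dX := det_pos hX.
have uX : Sx \in unitmx by rewrite unitmxE unitfE gt_eqF.
have [hC dE] := schur_facts hM uX.
pose C := Ss - Ssx *m invmx Sx *m Ssx^T.
change (posdef C) in hC.
have dC := det_pos hC.
have uC : C \in unitmx by rewrite unitmxE unitfE gt_eqF.
pose B := Ssx *m invmx Sx.
set U := block_mx 1%:M B 0 1%:M.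
set V := block_mx 1%:M (- B) 0 1%:M.
have UV : U *m V = 1%:M.
  rewrite mulmx_block !(mulmx0, mul0mx, mul1mx, mulmx1, addr0, add0r).
  by rewrite addNr -scalar_mx_block.
have VU := mulmx1C UV.
set N := block_mx C 0 0 Sx.
have uN : N \in unitmx by rewrite unitmxE det_ublock unitrM -!unitmxE uC uX.
have hs := schur Ss Ssx uX hX.1.
have eInv : invmx (block_mx Ss Ssx Ssx^T Sx) = V^T *m invmx N *m V.
  apply: inv_uniq; rewrite hs -/U -/N -/C.
  rewrite -!mulmxA [U^T *m _]mulmxA -trmx_mul VU trmx1 mul1mx.
  by rewrite mulKVmx.
have eQ : qform (invmx (block_mx Ss Ssx Ssx^T Sx)) (row_mx u z) =
   qform (invmx C) (u - mu) + qform (invmx Sx) z.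
  have ew : row_mx u z *m V^T = row_mx (u - mu) z.
    rewrite /V tr_block_mx !trmx1 trmx0 mul_row_block !(mulmx1, mulmx0, addr0, add0r).
    by rewrite linearN /= mulmxN.
  rewrite eInv invmx_block_diag // -qform_diag -ew.
  by rewrite qform_conj.
pose a := qform (invmx Sx) z.
pose b := qform (invmx C) (u - mu).
have a_gt0 : 0 < a := (posdef_inv hX uX).2 z hz.
have b_ge0 : 0 <= b := qform_ge0 _ (posdef_inv hC uC).
set nu : R := k%:R + 1.
have nu_gt0 : 0 < nu by rewrite /nu ltr_pwDr.
have c_gt0 : 0 < a / nu by rewrite divr_gt0.
have eSt : St = (a / nu) *: C by [].
have iSt : invmx St = (a / nu)^-1 *: invmx C.
  by rewrite eSt invmxZ // unitmxZ ?unitfE ?gt_eqF.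
have dSt : \det St = (a / nu) ^+ m * \det C by rewrite eSt detZ.
rewrite /lambda /lambda_dens /student_dens eM dE eQ iSt dSt qformZ -/Sx -/b -/a.
rewrite -/C natrD.
have pi0 : pi != 0 :> R by rewrite gt_eqF // pi_gt0.
have e1 : - ((m%:R + k%:R - 1) / 2) = - (m%:R / 2) + - ((k%:R - 1) / 2) :> R.
  by rewrite -opprD; congr (- _); rewrite -mulrDl addrA.
rewrite e1 powRD ?pi0 ?implybT //.
have e2 : (m%:R + k%:R + 1) = m%:R + nu :> R by rewrite /nu addrA.
rewrite e2 -/nu.
have qpos : 0 < 1 + (a / nu)^-1 * b / nu.
  apply: (lt_le_trans ltr01); rewrite lerDl.
  apply: divr_ge0; last exact: ltW.
  by apply: mulr_ge0 => //; rewrite invr_ge0 ltW.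
have e3 : b + a = (1 + (a / nu)^-1 * b / nu) * a.
  by field; rewrite ?gt_eqF.
have hA : a `^ (- ((m%:R + nu) / 2)) = a `^ (- (m%:R / 2)) * a `^ (- (nu / 2)).
  by rewrite mulrDl opprD powRD // (gt_eqF a_gt0) implybT.
have hB : ((a / nu) ^+ m) `^ (- (1 / 2)) = a `^ (- (m%:R / 2)) * (nu `^ (- (m%:R / 2)))^-1.
  rewrite -powR_mulrn ?ltW // -powRrM powRM ?ltW ?invr_gt0 // powRV //.
  by rewrite mulrN mul1r.
rewrite e3 (powRM _ (ltW qpos) (ltW a_gt0)) hA.
rewrite (powRM _ (exprn_ge0 _ (ltW c_gt0)) (ltW dC)) hB.
rewrite (powRM _ (ltW dC) (ltW dX)).
have P0 : pi `^ (- ((k%:R - 1) / 2)) != 0 :> R by rewrite gt_eqF // powR_gt0 // pi_gt0.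
have X0 : \det Sx `^ (- (1 / 2)) != 0 :> R by rewrite gt_eqF // powR_gt0.
have A0 : a `^ (- (nu / 2)) != 0 :> R by rewrite gt_eqF // powR_gt0.
have N0 : nu `^ (- (m%:R / 2)) != 0 :> R by rewrite gt_eqF // powR_gt0.
rewrite [(_ * Gamma (nu / 2))^-1]invfM.
move: (Gamma (nu / 2))^-1 => g.
move: P0 X0 A0 N0.
move: (pi `^ (- ((k%:R - 1) / 2))) (\det Sx `^ (- (1 / 2))) (a `^ (- (nu / 2))) (nu `^ (- (m%:R / 2))).
move=> P X An Nm P0 X0 A0 N0.
field.
by rewrite N0 A0 X0 P0.
Qed.
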